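(* Let $c_0,c_1$ be convex loops with length measures $\mu_0,\mu_1$, and suppose that for some $j\in\{0,1\}$ the loop $c_j$ is degenerate with $\mu_j=r\delta_{x_j}+r\delta_{-x_j}$ ($r>0$, $x_j\in S^1$). Let $i$ be the other index. Then $\mu_0,\mu_1$ are weakly admissible if and only if $\mu_i(\{\pm\,\mathrm{i}x_j\})=0$.
   Context: $S^1$ is the unit circle in $\mathbb{C}$ (identified with $\mathbb{R}/2\pi\mathbb{Z}$, arc-length measure $\mathrm{d}s$, geodesic distance $\operatorname{dist}$ with values in $[0,\pi]$). A convex loop is $c\in W^{1,1}(S^1,\mathbb{C})$ with $c'\neq0$ a.e. whose image is the boundary of a convex set in $\mathbb{C}$, positively oriented; its length measure is $\mu_c:=(T_c)_\#(|c'|\,\mathrm{d}s)$, $T_c=c'/|c'|$. Degenerate means $\mu_c=r\delta_x+r\delta_{-x}$ for some $r>0$, $x\in S^1$. Two measures $\mu_0,\mu_1\in\mathcal{M}_+(S^1)$ are weakly admissible if $\mu_i(\{x\in S^1:\operatorname{dist}(x,\operatorname{supp}\mu_j)\ge\pi/2\})=0$ for $\{i,j\}=\{0,1\}$. *)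

(* Defs.v *)
(* The plane C is modelled as R * R (pairs),
   multiplication by the imaginary unit i being (a,b) |-> (-b,a). *)
From HB Require Import structures.
From mathcomp Require Import all_boot all_order all_algebra.
From mathcomp Require Import all_classical all_reals all_analysis.
Set Implicit Arguments. Unset Strict Implicit. Unset Printing Implicit Defensive.
Import Order.TTheory GRing.Theory Num.Theory.
Import numFieldNormedType.Exports.
Local Open Scope classical_set_scope.
Local Open Scope ring_scope.

Section Defs.
Variable R : realType.
Notation pt := (R * R)%type.

Definition padd (p q : pt) : pt := (p.1 + q.1, p.2 + q.2).
Definition psub (p q : pt) : pt := (p.1 - q.1, p.2 - q.2).
Definition pscale (l : R) (p : pt) : pt := (l * p.1, l * p.2).
Definition pneg (p : pt) : pt := (- p.1, - p.2).
Definition pmul_i (p : pt) : pt := (- p.2, p.1).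
Definition pdot (p q : pt) : R := p.1 * q.1 + p.2 * q.2.
Definition pcross (p q : pt) : R := p.1 * q.2 - p.2 * q.1.
Definition pnorm (p : pt) : R := Num.sqrt (pdot p p).

Definition period : set R := `[0, 2 * pi]%classic.

Definition S1 : set pt := [set x | pdot x x = 1].
Definition gdist (x y : pt) : R := acos (pdot x y).

(* W^{1,1} loop on S^1 = R/2piZ: c is 2pi-periodic and absolutely continuous
   with (weak) derivative g, g integrable on a period:
   c t = c 0 + \int_0^t g  for t in [0, 2pi]. *)
Definition W11_loop (c g : R -> pt) : Prop :=
  (forall t, c (t + 2 * pi) = c t) /\
  (forall t, g (t + 2 * pi) = g t) /\
  lebesgue_measure.-integrable period (fun s => ((g s).1)%:E) /\
  lebesgue_measure.-integrable period (fun s => ((g s).2)%:E) /\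
  (forall t, 0 <= t <= 2 * pi ->
     c t = padd (c 0)
       (\int[lebesgue_measure]_(s in `[0, t]%classic) (g s).1,
        \int[lebesgue_measure]_(s in `[0, t]%classic) (g s).2)).

Definition convex_set (K : set pt) : Prop :=
  forall p q l, K p -> K q -> 0 <= l <= 1 ->
    K (padd (pscale l p) (pscale (1 - l) q)).

(* convex loop (c with derivative g): c' <> 0 a.e., the image of c is the
   boundary of a convex set K, positively oriented (K lies to the left of
   the tangent vector c' at a.e. parameter). *)
Definition convex_loop (c g : R -> pt) : Prop :=
  W11_loop c g /\
  (\forall s \ae lebesgue_measure, g s != (0, 0)) /\
  exists K : set pt, convex_set K /\
    range c = closure K `\` interior K /\
    (\forall s \ae lebesgue_measure, forall p, K p -> 0 <= pcross (g s) (psub p (c s))).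

Definition unit_tangent (g : R -> pt) (s : R) : pt := pscale (pnorm (g s))^-1 (g s).

(* length measure mu_c = (T_c)_# (|c'| ds), evaluated on a set A of points of C *)
Definition length_measure (g : R -> pt) (A : set pt) : \bar R :=
  (\int[lebesgue_measure]_(s in period)
     ((\1_A (unit_tangent g s) : R) * pnorm (g s))%:E)%E.

(* measures on S^1 are represented as set functions on subsets of C *)
Definition supp (mu : set pt -> \bar R) : set pt :=
  [set x | S1 x /\ forall e : R, 0 < e -> (0 < mu [set y | S1 y /\ (gdist x y < e)%R])%E].

Definition weakly_admissible (mu0 mu1 : set pt -> \bar R) : Prop :=
  mu0 [set x | S1 x /\ forall y, supp mu1 y -> pi / 2 <= gdist x y] = 0%E /\
  mu1 [set x | S1 x /\ forall y, supp mu0 y -> pi / 2 <= gdist x y] = 0%E.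

Definition is_degenerate_measure (mu : set pt -> \bar R) (r : R) (x : pt) : Prop :=
  forall A : set pt, measurable A ->
    mu A = ((r * \1_A x + r * \1_A (pneg x) : R)%:E).

End Defs.

(* Main.v *)
Require Import Defs.
From HB Require Import structures.
From mathcomp Require Import all_boot all_order all_algebra.
From mathcomp Require Import all_classical all_reals all_analysis.
From mathcomp Require Import ring lra.
From mathcomp Require Import measurable_realfun.
Import Order.TTheory GRing.Theory Num.Theory.
Set Implicit Arguments. Unset Strict Implicit. Unset Printing Implicit Defensive.
Local Open Scope classical_set_scope.
Local Open Scope ring_scope.

Section Geo.
Variable R : realType.
Notation pt := (R * R)%type.

Lemma S1E (x : pt) : S1 x <-> x.1 ^+ 2 + x.2 ^+ 2 = 1.
Proof. by rewrite /S1 /pdot /= !expr2. Qed.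

Lemma pdot_bnd (x y : pt) : S1 x -> S1 y -> -1 <= pdot x y <= 1.
Proof.
move=> /S1E hx /S1E hy; rewrite /pdot.
have e : (x.1 * y.1 + x.2 * y.2) ^+ 2 + (x.1 * y.2 - x.2 * y.1) ^+ 2 = 1.
  by rewrite -[1](mulr1 1) -{1}hx -hy; ring.
move: e; set P := (x.1 * y.1 + _); set Q := (x.1 * y.2 - _) => e.
have hq : 0 <= Q ^+ 2 by exact: sqr_ge0.
have hp : P ^+ 2 <= 1 by lra.
apply/andP; split; nra.
Qed.

Lemma acos_lt (a b : R) : -1 <= a <= 1 -> -1 <= b <= 1 ->
  (acos a < acos b) = (b < a).
Proof.
move=> ha hb.
have [[ha1 ha2] [hb1 hb2]] := (acos_def ha, acos_def hb).
rewrite -{2}ha2 -{2}hb2 ltr_cos //; rewrite in_itv /=; exact/andP.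
Qed.

Lemma acos_le (a b : R) : -1 <= a <= 1 -> -1 <= b <= 1 ->
  (acos a <= acos b) = (b <= a).
Proof. by move=> ha hb; rewrite !leNgt acos_lt. Qed.

Lemma gdist_self (x : pt) : S1 x -> gdist x x = 0.
Proof. by rewrite /gdist /S1 => ->; exact: acos1. Qed.

Lemma pdot_lt1 (x y : pt) : S1 x -> S1 y -> x <> y -> pdot x y < 1.
Proof.
move=> hx hy nxy; have := pdot_bnd hx hy; case/andP=> _.
rewrite le_eqVlt => /orP[/eqP e|//]; exfalso; apply: nxy.
move: hx hy e; rewrite /S1 /pdot; case: x => a b; case: y => c d /= h1 h2 e.
have e2 : (a - c) ^+ 2 + (b - d) ^+ 2 = 0.
  have -> : (a - c) ^+ 2 + (b - d) ^+ 2 = (a * a + b * b) + (c * c + d * d) - 2 * (a * c + b * d) by ring.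
  by rewrite h1 h2 e; ring.
have h3 := sqr_ge0 (a - c); have h4 := sqr_ge0 (b - d).
have ac : (a - c) ^+ 2 = 0 by lra.
have bd : (b - d) ^+ 2 = 0 by lra.
move/eqP: ac; rewrite sqrf_eq0 => /eqP ac.
move/eqP: bd; rewrite sqrf_eq0 => /eqP bd.
by congr pair; apply/eqP; rewrite -subr_eq0; apply/eqP.
Qed.

Lemma gdist_pos (x y : pt) : S1 x -> S1 y -> x <> y -> 0 < gdist x y.
Proof.
move=> hx hy nxy; rewrite /gdist acos_gt0 //.
by have /andP[-> _] := pdot_bnd hx hy; rewrite pdot_lt1.
Qed.

Lemma gdist_ge_pi2 (x y : pt) : S1 x -> S1 y -> (pi / 2 <= gdist x y) = (pdot x y <= 0).
Proof.
move=> hx hy; rewrite /gdist -acos0 acos_le //; last exact: pdot_bnd.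
by rewrite lerN10 ler01.
Qed.

Lemma gdist_lt_pi2 (x y : pt) : S1 x -> S1 y -> (gdist x y < pi / 2) = (0 < pdot x y).
Proof. by move=> hx hy; rewrite ltNge gdist_ge_pi2 // -ltNge. Qed.

Lemma S1N (x : pt) : S1 x -> S1 (pneg x).
Proof. by rewrite /S1 /pdot /= !mulrNN. Qed.

Lemma S1i (x : pt) : S1 x -> S1 (pmul_i x).
Proof. by rewrite /S1 /pdot /= mulrNN addrC. Qed.

Lemma pdotN (x y : pt) : pdot x (pneg y) = - pdot x y.
Proof. by rewrite /pdot /=; ring. Qed.

Lemma pdotC (x y : pt) : pdot x y = pdot y x.
Proof. by rewrite /pdot mulrC [x.2 * _]mulrC. Qed.

Lemma perp_unit (x u : pt) : S1 x -> S1 u -> pdot x u = 0 ->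
  x = pmul_i u \/ x = pneg (pmul_i u).
Proof.
case: x => a b; case: u => c d; rewrite /S1 /pdot /pmul_i /pneg /= => h1 h2 e.
have cr : (c * b - d * a) ^+ 2 = 1.
  have : (a * c + b * d) ^+ 2 + (c * b - d * a) ^+ 2 = 1.
    by rewrite -[1](mulr1 1) -{1}h1 -h2; ring.
  by rewrite e expr0n /= add0r.
have : (c * b - d * a - 1) * (c * b - d * a + 1) = 0.
  by rewrite -subr_sqr cr expr1n subrr.
have ea : a = - d * (c * b - d * a) + c * (a * c + b * d).
  by rewrite -[LHS]mulr1 -h2; ring.
have eb : b = c * (c * b - d * a) + d * (a * c + b * d).
  by rewrite -[LHS]mulr1 -h2; ring.
rewrite e !mulr0 !addr0 in ea eb.
move/eqP; rewrite mulf_eq0 => /orP[|] /eqP k.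
- have k' : c * b - d * a = 1 by lra.
  by left; congr pair; [rewrite {1}ea | rewrite {1}eb]; rewrite k'; ring.
- have k' : c * b - d * a = -1 by lra.
  by right; congr pair; [rewrite {1}ea | rewrite {1}eb]; rewrite k'; ring.
Qed.

Lemma pnegN (x : pt) : S1 x -> pneg x <> x.
Proof.
case: x => a b; rewrite /S1 /pdot /pneg /= => h [] ea eb.
have a0 : a = 0 by lra.
have b0 : b = 0 by lra.
by move: h; rewrite a0 b0 mulr0 addr0 => /esym/eqP; rewrite oner_eq0.
Qed.

End Geo.
Lemma le_int_nm d (T : measurableType d) (R : realType) (mu : {measure set T -> \bar R})
  (D : set T) (f1 f2 : T -> \bar R) :
  (forall x, D x -> (0 <= f1 x)%E) -> (forall x, D x -> (f1 x <= f2 x)%E) ->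
  (\int[mu]_(x in D) f1 x <= \int[mu]_(x in D) f2 x)%E.
Proof.
move=> f10 f12.
have f20 : forall x, D x -> (0 <= f2 x)%E by move=> x Dx; exact: le_trans (f10 x Dx) (f12 x Dx).
rewrite (ge0_integralE _ f10) (ge0_integralE _ f20).
apply: ereal_sup_le => _ [h /= hf <-]; exists h => //= x.
apply: le_trans (hf x) _.
rewrite /patch; case: ifP => // /set_mem Dx; exact: f12.
Qed.

Section M.
Variable R : realType.
Notation pt := (R * R)%type.

Lemma pnorm_ge0 (p : pt) : 0 <= pnorm p.
Proof. exact: sqrtr_ge0. Qed.

Lemma LM_ge0 (g : R -> pt) A : (0 <= length_measure g A)%E.
Proof.
by apply: integral_ge0 => s _; rewrite lee_fin mulr_ge0 ?pnorm_ge0 // indicE ler0n.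
Qed.

Lemma LM_mono (g : R -> pt) (A B : set pt) : A `<=` B ->
  (length_measure g A <= length_measure g B)%E.
Proof.
move=> AB; apply: le_int_nm => s _.
  by rewrite lee_fin mulr_ge0 ?pnorm_ge0 // indicE ler0n.
rewrite lee_fin ler_wpM2r ?pnorm_ge0 // !indicE.
case: (boolP (_ \in A)) => [/set_mem /AB /mem_set -> //|_].
by rewrite ler0n.
Qed.

Lemma meas_set1 (p : pt) : measurable [set p].
Proof.
have -> : [set p] = [set p.1] `*` [set p.2].
  apply/seteqP; split => [q /= -> //|[a b] /= [-> ->]]; by case: p.
by apply: measurableX; exact: measurable_set1.
Qed.

Lemma meas_set2 (p q : pt) : measurable [set p; q].
Proof. by apply: measurableU; exact: meas_set1. Qed.

End M.

Section Deg.
Variable R : realType.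
Notation pt := (R * R)%type.
Variables (g : R -> pt) (r : R) (x : pt).
Hypotheses (r0 : 0 < r) (Sx : S1 x)
  (hdeg : is_degenerate_measure (length_measure g) r x).

Let mu := length_measure g.

Lemma deg_single_x : mu [set x] = r%:E.
Proof.
rewrite /mu hdeg; last exact: meas_set1.
rewrite /indic mem_set //.
by rewrite memNset ?mulr0 ?addr0 ?mulr1 //=; exact: pnegN.
Qed.

Lemma deg_single_nx : mu [set pneg x] = r%:E.
Proof.
rewrite /mu hdeg; last exact: meas_set1.
rewrite /indic [pneg x \in _]mem_set //.
rewrite memNset ?mulr0 ?add0r ?mulr1 //=; move=> e.
by apply: (pnegN Sx); rewrite -e.
Qed.

Lemma deg_compl : mu (~` [set x; pneg x]) = 0%E.
Proof.
rewrite /mu hdeg; last by apply: measurableC; exact: meas_set2.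
rewrite /indic !memNset ?mulr0 ?addr0 //= => -[]; by [left|right].
Qed.

Lemma deg_supp y : supp mu y <-> (y = x \/ y = pneg x).
Proof.
split.
- move=> [Sy hy]; apply: contrapT => /not_orP [nx nnx].
  pose e := Num.min (gdist y x) (gdist y (pneg x)).
  have e0 : 0 < e by rewrite lt_min !gdist_pos //; exact: S1N.
  have := hy e e0; apply/negP; rewrite -leNgt.
  rewrite -deg_compl; apply: LM_mono => z [Sz hz] [] ez; move: hz; rewrite ez.
  + by rewrite /e lt_min ltxx.
  + by rewrite /e lt_min ltxx andbF.
- have Snx := S1N Sx.
  move=> [->|->]; split => // e e0.
  + apply: (@lt_le_trans _ _ r%:E); first by rewrite lte_fin.
    rewrite -deg_single_x; apply: LM_mono => z -> /=; split => //.
    by rewrite gdist_self.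
  + apply: (@lt_le_trans _ _ r%:E); first by rewrite lte_fin.
    rewrite -deg_single_nx; apply: LM_mono => z -> /=; split => //.
    by rewrite gdist_self.
Qed.

End Deg.

Lemma Aset_eq (R : realType) (mu : set (R * R) -> \bar R) (u : R * R) :
  S1 u -> (forall y, supp mu y <-> (y = u \/ y = pneg u)) ->
  [set x | S1 x /\ forall y, supp mu y -> pi / 2 <= gdist x y] =
  [set pmul_i u; pneg (pmul_i u)].
Proof.
move=> Su hs; apply/seteqP; split.
- move=> z [Sz hz].
  have h1 := hz u (proj2 (hs u) (or_introl erefl)).
  have h2 := hz (pneg u) (proj2 (hs _) (or_intror erefl)).
  rewrite (gdist_ge_pi2 Sz Su) in h1; rewrite (gdist_ge_pi2 Sz (S1N Su)) pdotN in h2.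
  have e : pdot z u = 0 by lra.
  by have [->|->] := perp_unit Sz Su e; [left|right].
- have Si := S1i Su.
  have h0 : pdot (pmul_i u) u = 0 by rewrite /pdot /=; ring.
  move=> z [] -> /=; [split; first exact: Si|split; first exact: S1N]; move=> y /hs [] ->.
  + by rewrite (gdist_ge_pi2 Si Su) h0.
  + by rewrite (gdist_ge_pi2 Si (S1N Su)) pdotN h0 oppr0.
  + by rewrite (gdist_ge_pi2 (S1N Si) Su) pdotC pdotN pdotC h0 oppr0.
  + by rewrite (gdist_ge_pi2 (S1N Si) (S1N Su)) pdotN pdotC pdotN pdotC h0 !oppr0.
Qed.


Lemma B_zero (R : realType) (mj mi : set (R * R) -> \bar R) (u : R * R) :
  S1 u -> (forall A B, A `<=` B -> (mj A <= mj B)%E) -> (forall A, (0 <= mj A)%E) ->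
  mj (~` [set u; pneg u]) = 0%E ->
  (exists y, supp mi y /\ 0 < pdot y u) ->
  (exists y, supp mi y /\ 0 < pdot y (pneg u)) ->
  mj [set x | S1 x /\ forall y, supp mi y -> pi / 2 <= gdist x y] = 0%E.
Proof.
move=> Su mono ge0 hc [y1 [[S1y1 h1] p1]] [y2 [[S1y2 h2] p2]].
apply/eqP; rewrite eq_le ge0 andbT -hc; apply: mono => x [Sx hx] [] ex.
- have := hx y1 (conj S1y1 h1); rewrite ex (gdist_ge_pi2 Su S1y1) pdotC.
  by rewrite leNgt p1.
- have := hx y2 (conj S1y2 h2); rewrite ex (gdist_ge_pi2 (S1N Su) S1y2) pdotC.
  by rewrite leNgt p2.
Qed.

Lemma set_iN (R : realType) (u : R * R) :
  [set pmul_i (pneg u); pneg (pmul_i (pneg u))] = [set pmul_i u; pneg (pmul_i u)].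
Proof.
have e1 : pmul_i (pneg u) = pneg (pmul_i u) by rewrite /pmul_i /pneg /= opprK.
have e2 : pneg (pneg (pmul_i u)) = pmul_i u.
  by rewrite /pneg /pmul_i /= !opprK.
by rewrite e1 e2; apply/seteqP; split => z [] ->; by [left|right].
Qed.

Lemma main_gen (R : realType) (gi gj : R -> R * R) (r : R) (u : R * R) :
  0 < r -> S1 u -> is_degenerate_measure (length_measure gj) r u ->
  (forall v, S1 v -> length_measure gi [set pmul_i v; pneg (pmul_i v)] = 0%E ->
     exists y, supp (length_measure gi) y /\ 0 < pdot y v) ->
  ((length_measure gi [set x | S1 x /\ forall y, supp (length_measure gj) y -> pi / 2 <= gdist x y] = 0%E /\
    length_measure gj [set x | S1 x /\ forall y, supp (length_measure gi) y -> pi / 2 <= gdist x y] = 0%E)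
   <-> length_measure gi [set pmul_i u; pneg (pmul_i u)] = 0%E).
Proof.
move=> r0 Su hdeg core.
rewrite (Aset_eq Su (deg_supp r0 Su hdeg)).
split=> [[] //|h]; split => //.
apply: (B_zero Su (@LM_mono _ gj) (@LM_ge0 _ gj) (deg_compl hdeg)).
- exact: core.
- apply: core; first exact: S1N.
  by rewrite set_iN.
Qed.

Lemma mlt (R : realType) (D : set R) (f h : R -> R) : measurable D ->
  measurable_fun D f -> measurable_fun D h -> measurable (D `&` [set x | f x < h x]).
Proof.
move=> mD mf mh.
have mf' : measurable_fun D (EFin \o f) by apply/measurable_EFinP.
have mh' : measurable_fun D (EFin \o h) by apply/measurable_EFinP.
have := measurable_lte mD mf' mh'.
by congr measurable; apply/seteqP; split => x [Dx /=]; rewrite ?lte_fin.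
Qed.

Lemma mle (R : realType) (D : set R) (f h : R -> R) : measurable D ->
  measurable_fun D f -> measurable_fun D h -> measurable (D `&` [set x | f x <= h x]).
Proof.
move=> mD mf mh.
have mf' : measurable_fun D (EFin \o f) by apply/measurable_EFinP.
have mh' : measurable_fun D (EFin \o h) by apply/measurable_EFinP.
have := measurable_lee mD mf' mh'.
by congr measurable; apply/seteqP; split => x [Dx /=]; rewrite ?lee_fin.
Qed.

Lemma sq_le (R : realType) (a b : R) : 0 <= b -> a ^+ 2 <= b ^+ 2 -> a <= b.
Proof. move=> b0 h; rewrite leNgt; apply/negP => ba; nra. Qed.

Lemma ball_alg (R : realType) (psi phi t eta c : R) : 0 <= psi -> psi ^+ 2 + phi ^+ 2 = 1 ->
  t ^+ 2 <= 1 -> `|phi - t| < eta -> eta <= 1 -> 3 * eta / 2 < 1 - c ->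
  c < Num.sqrt (1 - t ^+ 2) * psi + t * phi.
Proof.
move=> p0 e t1 dlt e1 ec.
set s := Num.sqrt (1 - t ^+ 2).
have s0 : 0 <= s by exact: sqrtr_ge0.
have s2 : s ^+ 2 = 1 - t ^+ 2 by rewrite sqr_sqrtr // subr_ge0.
set d := phi - t.
have phi1 : phi ^+ 2 <= 1 by have := sqr_ge0 psi; lra.
have aphi : `|phi| <= 1 by rewrite -(ler_pXn2r (n := 2)) ?nnegrE // real_normK ?num_real // expr1n.
have at1 : `|t| <= 1 by rewrite -(ler_pXn2r (n := 2)) ?nnegrE // real_normK ?num_real // expr1n.
have key : 1 - (s * psi + t * phi) = ((s - psi) ^+ 2 + d ^+ 2) / 2.
  rewrite /d; apply: (@mulIf _ 2); first by rewrite pnatr_eq0.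
  rewrite mulfVK ?pnatr_eq0 //.
  have -> : (s - psi) ^+ 2 + (phi - t) ^+ 2 = s ^+ 2 + psi ^+ 2 + phi ^+ 2 + t ^+ 2 - 2 * (s * psi + t * phi) by ring.
  rewrite s2; have -> : 1 - t ^+ 2 + psi ^+ 2 + phi ^+ 2 + t ^+ 2 = 1 + (psi ^+ 2 + phi ^+ 2) by ring.
  by rewrite e; ring.
have sq : (s - psi) ^+ 2 <= `|phi ^+ 2 - t ^+ 2|.
  have -> : phi ^+ 2 - t ^+ 2 = s ^+ 2 - psi ^+ 2 by rewrite s2; lra.
  have [hs|hs] := leP psi s.
  - rewrite ger0_norm; last by rewrite subr_ge0 ler_pXn2r // nnegrE.
    nra.
  - rewrite ler0_norm; last by rewrite subr_le0 ler_pXn2r ?nnegrE // ltW.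
    nra.
have ad : `|phi ^+ 2 - t ^+ 2| <= 2 * `|d|.
  rewrite subr_sqr normrM /d mulrC ler_wpM2r //.
  by apply: le_trans (ler_normD _ _) _; lra.
have d2 : d ^+ 2 <= `|d|.
  rewrite -real_normK ?num_real // expr2.
  have : `|d| <= 1 by apply: le_trans e1; apply: ltW.
  have := normr_ge0 d; nra.
have : 1 - (s * psi + t * phi) < 3 * eta / 2.
  rewrite key; lra.
lra.
Qed.

Section Core.
Variable R : realType.
Notation pt := (R * R)%type.
Notation mu := (@lebesgue_measure R).
Variables (g : R -> pt).
Hypothesis (i1 : mu.-integrable (@period R) (fun s => ((g s).1)%:E))
  (i2 : mu.-integrable (@period R) (fun s => ((g s).2)%:E)).

Let P : set R := @period R.
Let mP : measurable P. Proof. exact: measurable_itv. Qed.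

Definition G (s : R) := pnorm (g s).

Let mg1 : measurable_fun P (fun s => (g s).1).
Proof. by apply/measurable_EFinP; exact: (measurable_int _ i1). Qed.
Let mg2 : measurable_fun P (fun s => (g s).2).
Proof. by apply/measurable_EFinP; exact: (measurable_int _ i2). Qed.

Lemma mG : measurable_fun P G.
Proof.
rewrite /G /pnorm /pdot.
have ms : measurable_fun setT (@Num.sqrt R).
  exact: continuous_measurable_fun (@sqrt_continuous R).
have mh : measurable_fun P (fun s => (g s).1 * (g s).1 + (g s).2 * (g s).2).
  by apply: measurable_funD; apply: measurable_funM.
exact: (measurableT_comp ms mh).
Qed.

Lemma L_pos (E : set R) (A : set pt) : measurable E -> E `<=` P -> (0 < mu E)%E ->
  (forall s, E s -> 0 < G s /\ A (unit_tangent g s)) -> (0 < length_measure g A)%E.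
Proof.
move=> mE EP E0 hE.
pose f := fun s => ((\1_E s : R) * G s)%:E.
have f0 : forall s, (0 <= f s)%E.
  by move=> s; rewrite lee_fin mulr_ge0 ?pnorm_ge0 // indicE ler0n.
have le : (\int[mu]_(s in P) f s <= length_measure g A)%E.
  apply: le_int_nm => s Ps; first exact: f0.
  rewrite lee_fin /G ler_wpM2r ?pnorm_ge0 // !indicE.
  case: (boolP (s \in E)) => [/set_mem /hE [_ /mem_set -> //]|_].
  by rewrite ler0n.
apply: lt_le_trans le; rewrite lt0e integral_ge0 ?andbT; last by move=> s _; exact: f0.
apply/negP => /eqP I0.
have mf : measurable_fun P f.
  apply/measurable_EFinP; apply: measurable_funM; last exact: mG.
  exact: measurable_indic.
have : (\int[mu]_(s in P) `|f s| = 0)%E.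
  by rewrite -I0; apply: eq_integral => s _; rewrite gee0_abs.
move/(ae_eq_integral_abs mu mP mf) => [N [mN N0 sub]].
have EN : E `<=` N.
  move=> s Es; apply: sub => /= /(_ (EP _ Es)).
  rewrite /f indicE mem_set // mul1r => -[] /eqP; rewrite gt_eqF //.
  by have [] := hE _ Es.
have E00 : mu E = 0%E by apply: (subset_measure0 _ _ _ N0).
by move: E0; rewrite E00 ltxx.
Qed.


Variable v : pt.
Hypothesis Sv : S1 v.

Definition hh (s : R) := pdot (g s) v.
Definition kk (s : R) := pcross v (g s).

Let mh : measurable_fun P hh.
Proof. by apply: measurable_funD; apply: measurable_funM => //; exact: measurable_cst. Qed.
Let mk : measurable_fun P kk.
Proof. by apply: measurable_funB; apply: measurable_funM => //; exact: measurable_cst. Qed.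

Lemma G2 s : G s ^+ 2 = (g s).1 ^+ 2 + (g s).2 ^+ 2.
Proof. rewrite /G /pnorm sqr_sqrtr /pdot ?expr2 //; nra. Qed.

Lemma hk2 s : hh s ^+ 2 + kk s ^+ 2 = G s ^+ 2.
Proof.
rewrite G2 /hh /kk /pdot /pcross; move: Sv; rewrite /S1 /pdot => e.
rewrite -[_ + (g s).2 ^+ 2]mulr1 -e; ring.
Qed.

Lemma tangent_facts s : 0 < G s ->
  [/\ S1 (unit_tangent g s), pdot (unit_tangent g s) v = hh s / G s &
      pcross v (unit_tangent g s) = kk s / G s].
Proof.
move=> G0; have Gn : G s != 0 by rewrite gt_eqF.
rewrite /unit_tangent /pscale /S1 /pdot /pcross /hh /kk /= -/(G s); split.
- have := G2 s; rewrite !expr2 => e.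
  apply: (@mulIf _ (G s * G s)); first by rewrite mulf_neq0.
  by rewrite mul1r {2}e; field.
- by rewrite /pdot; field.
- by rewrite /pcross; field.
Qed.


Lemma hhG s : hh s <= G s.
Proof.
have G0 : 0 <= G s by exact: pnorm_ge0.
have e := hk2 s; have := sqr_ge0 (kk s).
move=> h0; apply: le_trans (ler_norm _) _.
rewrite -(ler_pXn2r (n := 2)) ?nnegrE //; rewrite real_normK ?num_real //; lra.
Qed.

Lemma kkG s : `|kk s| <= G s.
Proof.
have G0 : 0 <= G s by exact: pnorm_ge0.
have e := hk2 s; have := sqr_ge0 (hh s).
move=> h0; rewrite -(ler_pXn2r (n := 2)) ?nnegrE //; rewrite real_normK ?num_real //; lra.
Qed.

Lemma pdot_y (a b : R) (T : pt) :
  pdot (a * v.1 - b * v.2, a * v.2 + b * v.1) T = a * pdot T v + b * pcross v T.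
Proof. rewrite /pdot /pcross /=; ring. Qed.

Lemma S1_y (a b : R) : a ^+ 2 + b ^+ 2 = 1 -> S1 (a * v.1 - b * v.2, a * v.2 + b * v.1).
Proof.
move: Sv; rewrite /S1 /pdot /= => e1 e2.
rewrite -[RHS]mulr1 -{1}e2 -e1; ring.
Qed.

Lemma stepB (d : R) (Q : set R) : 0 < d -> measurable Q -> Q `<=` P -> (0 < mu Q)%E ->
  (forall s, Q s -> 0 < hh s /\ d * G s <= hh s) ->
  exists y, supp (length_measure g) y /\ 0 < pdot y v.
Proof.
move=> d0 mQ QP Q0 hQ.
have GQ s : Q s -> 0 < G s by move=> /hQ [h0 _]; exact: lt_le_trans h0 (hhG s).
have [s0 Qs0] : exists s, Q s.
  apply: contrapT => nQ; move: Q0; suff -> : Q = set0 by rewrite measure0 ltxx.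
  by apply/seteqP; split => // s Qs; apply: nQ; exists s.
have d1 : d <= 1.
  have [h0 hd] := hQ _ Qs0; have G0 := GQ _ Qs0; have := hhG s0.
  move=> hG; rewrite -(ler_pM2r G0) mul1r; lra.
pose K := Num.sqrt (1 - d ^+ 2).
have K0 : 0 <= K by exact: sqrtr_ge0.
have K2 : K ^+ 2 = 1 - d ^+ 2 by rewrite sqr_sqrtr // subr_ge0 expr_le1 // ltW.
have kQ s : Q s -> `|kk s| <= K * G s.
  move=> Qs; have [h0 hd] := hQ _ Qs; have G0 := GQ _ Qs.
  apply: sq_le; first by rewrite mulr_ge0 // ltW.
  rewrite real_normK ?num_real // exprMn K2.
  have e := hk2 s.
  have : (d * G s) ^+ 2 <= hh s ^+ 2.
    have : 0 <= d * G s by rewrite mulr_ge0 // ltW.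
    nra.
  rewrite exprMn; nra.
pose Lt t := Q `&` [set s | kk s < t * G s].
have mLt t : measurable (Lt t).
  apply: mlt => //; first exact: measurable_funS mk.
  by apply: measurable_funM; [exact: measurable_cst | exact: measurable_funS mG].
pose S := [set t | mu (Lt t) = 0%E].
have SK : S (- K).
  have L0 : Lt (- K) = set0.
    apply/seteqP; split => // s [Qs /=]; have := kQ _ Qs; rewrite mulNr.
    have := ler_norm (- kk s); rewrite normrN; lra.
  by rewrite /S /= L0 measure0.
have Sub t : S t -> t <= K.
  move=> St; rewrite leNgt; apply/negP => Kt.
  have LQ : Lt t = Q.
    apply/seteqP; split => [s [] //|s Qs]; split => //=.
    have := kQ _ Qs; have := ler_norm (kk s); have := GQ _ Qs.
    have : K * G s < t * G s by rewrite ltr_pM2r // GQ.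
    lra.
  by move: Q0; rewrite -LQ St ltxx.
have hasS : has_sup S by split; [exists (- K) | exists K => t /Sub].
pose ts := sup S.
have ts1 : - K <= ts by exact: sup_upper_bound.
have ts2 : ts <= K by apply: ge_sup; [exists (- K) | move=> t /Sub].
have ts3 : ts ^+ 2 <= 1 - d ^+ 2.
  rewrite -K2; have : - K <= ts <= K by rewrite ts1 ts2.
  move=> /andP[a b]; nra.
pose ss := Num.sqrt (1 - ts ^+ 2).
have ss0 : 0 < ss.
  rewrite sqrtr_gt0; have : 0 < d ^+ 2 by rewrite exprn_gt0.
  lra.
have ss2 : ss ^+ 2 + ts ^+ 2 = 1.
  by rewrite sqr_sqrtr; [ring | have := sqr_ge0 d; lra].
pose y := (ss * v.1 - ts * v.2, ss * v.2 + ts * v.1).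
have Sy : S1 y by exact: S1_y.
exists y; split; last first.
  rewrite /y pdot_y; have -> : pdot v v = 1 by exact: Sv.
  have -> : pcross v v = 0 by rewrite /pcross mulrC subrr.
  by rewrite mulr1 mulr0 addr0.
split => // e e0.
pose e' := Num.min e pi.
have e'0 : 0 < e' by rewrite lt_min e0 pi_gt0.
have e'pi : e' <= pi by rewrite ge_min lexx orbT.
have e'e : e' <= e by rewrite ge_min lexx.
have ce1 : cos e' < 1.
  rewrite -cos0 ltr_cos // in_itv /= ?lexx ?pi_ge0 ?(ltW e'0) //.
pose eta := Num.min 1 ((1 - cos e') / 2).
have eta0 : 0 < eta by rewrite lt_min ltr01 divr_gt0 // subr_gt0.
have eta1 : eta <= 1 by rewrite ge_min lexx.
have eta2 : eta <= (1 - cos e') / 2 by rewrite ge_min lexx orbT.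
have [t St tlt] := sup_adherent eta0 hasS.
have nS : ~ S (ts + eta).
  move=> /(sup_upper_bound hasS); rewrite -/ts; lra.
pose E := Lt (ts + eta) `&` [set s | t * G s <= kk s].
have sLP : Lt (ts + eta) `<=` P by move=> s [Qs _]; exact: QP.
have mE : measurable E.
  apply: mle; first exact: mLt.
    apply: measurable_funM; first exact: measurable_cst.
    exact: (measurable_funS mP sLP mG).
  exact: (measurable_funS mP sLP mk).
have E0 : (0 < mu E)%E.
  have le1 : (mu (Lt (ts + eta)%R) <= mu (Lt t `|` E))%E.
    apply: le_measure; rewrite ?inE.
    - exact: mLt.
    - exact: (measurableU _ _ (mLt t) mE).
    move=> s [Qs hs]; have [h1|h1] := ltP (kk s) (t * G s); first by left.
    by right.
  have le2 : (mu (Lt t `|` E) <= mu (Lt t) + mu E)%E := measureU2 mu (mLt t) mE.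
  have St' : mu (Lt t) = 0%E := St.
  rewrite St' add0e in le2.
  have := le_trans le1 le2; rewrite lt0e measure_ge0 andbT.
  apply: contraPneq => E00 h; apply: nS; apply/eqP; rewrite eq_le measure_ge0 andbT.
  by rewrite /S /=; move: h; rewrite E00.
apply: (L_pos mE) => //.
  by move=> s [[Qs _] _]; exact: QP.
move=> s [[Qs /= hlt] hge]; have G0 := GQ _ Qs; split => //.
have [ST hT kT] := tangent_facts G0.
split => //.
have [hpos _] := hQ _ Qs.
have Gn : G s != 0 by rewrite gt_eqF.
have psi0 : 0 <= hh s / G s by rewrite divr_ge0 // ltW.
have e2 : (hh s / G s) ^+ 2 + (kk s / G s) ^+ 2 = 1.
  by rewrite !expr_div_n -mulrDl hk2 divff // expf_neq0.
have tl : t <= kk s / G s by rewrite ler_pdivlMr.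
have tu : kk s / G s < ts + eta by rewrite ltr_pdivrMr.
have dist : `|kk s / G s - ts| < eta.
  rewrite ltr_norml; apply/andP; split; rewrite -/ts in tlt; lra.
have ts21 : ts ^+ 2 <= 1 by have := sqr_ge0 d; lra.
have ce : 3 * eta / 2 < 1 - cos e' by lra.
have := ball_alg psi0 e2 ts21 dist eta1 ce; rewrite -/ss -hT -kT -pdot_y -/y => ci.
apply: lt_le_trans e'e.
have cb : -1 <= cos e' <= 1 by rewrite cos_geN1 cos_le1.
rewrite /gdist -{1}(@cosK _ e'); last by rewrite in_itv /= e'pi ltW.
by rewrite acos_lt //; exact: pdot_bnd.
Qed.


Hypothesis Ih : (\int[mu]_(s in P) (hh s)%:E = 0)%E.
Hypothesis gnz : \forall s \ae mu, g s != (0, 0).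
Hypothesis hz : length_measure g [set pmul_i v; pneg (pmul_i v)] = 0%E.

Definition Qn (n : nat) := (P `&` [set s | (n.+1%:R)^-1 * G s <= hh s]) `&`
   (P `&` [set s | 0 < hh s]).

Lemma mQn n : measurable (Qn n).
Proof.
apply: measurableI.
- apply: (mle mP) => //.
  by apply: measurable_funM; [exact: measurable_cst | exact: mG].
- by apply: (mlt mP) => //; exact: measurable_cst.
Qed.

Lemma muP : (0 < mu P)%E.
Proof.
rewrite /P /period lebesgue_measure_itv /= ifT.
  by rewrite sube0 lte_fin mulr_gt0 ?pi_gt0.
by rewrite lte_fin mulr_gt0 ?pi_gt0.
Qed.

Lemma stepA : exists n, (0 < mu (Qn n))%E.
Proof.
apply: contrapT => /forallNP H.
have Q0 n : mu (Qn n) = 0%E.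
  by apply/eqP; rewrite eq_le measure_ge0 andbT leNgt; apply/negP; exact: H.
have [B [mB B0 sB]] : mu.-negligible (\bigcup_n Qn n).
  apply: (@negligible_bigcup _ _ _ mu Qn) => n.
  by exists (Qn n); split; [exact (mQn n)|exact (Q0 n)|].
have hle s : P s -> ~ B s -> hh s <= 0.
  move=> Ps nB; rewrite leNgt; apply/negP => hp; apply: nB; apply: sB.
  have G0 : 0 < G s by exact: lt_le_trans hp (hhG s).
  exists (Num.trunc (G s / hh s)) => //; split; split => //=.
  have := truncnS_gt (G s / hh s); rewrite ltr_pdivrMr // => lt.
  rewrite ler_pdivrMl ?ltr0Sn //; exact: ltW.
pose f := fun s => (hh s)%:E.
have mfh : measurable_fun P f.
  have := (measurable_EFinP P hh).2 mh; exact.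

have ip : (\int[mu]_(s in P) f^\+ s = 0)%E.
  have e : (\int[mu]_(s in P) `|f^\+ s| = \int[mu]_(s in P) f^\+ s)%E.
    by apply: eq_integral => s _; rewrite gee0_abs // funepos_ge0.
  rewrite -e; apply/(ae_eq_integral_abs mu mP (measurable_funepos mfh)).
  exists B; split => // s /= /not_implyP [Ps]; apply: contra_notP => nB.
  by rewrite funeposE /f max_r // lee_fin hle.
have in0 : (\int[mu]_(s in P) f^\- s = 0)%E.
  move: Ih; rewrite -/f integralE ip sub0e => /eqP; rewrite oppe_eq0 => /eqP //.
have e2 : (\int[mu]_(s in P) `|f^\- s| = 0)%E.
  by rewrite -in0; apply: eq_integral => s _; rewrite gee0_abs // funeneg_ge0.
have [B2 [mB2 B20 sB2]] := (ae_eq_integral_abs mu mP (measurable_funeneg mfh)).1 e2.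
have [B3 [mB3 B30 sB3]] := gnz.
pose N := B `|` B2 `|` B3.
have mN : measurable N by apply: measurableU => //; exact: measurableU.
have N0 : mu N = 0%E.
  apply/eqP; rewrite eq_le measure_ge0 andbT.
  have l1 : (mu N <= mu (B `|` B2) + mu B3)%E := measureU2 mu (measurableU _ _ mB mB2) mB3.
  have l2 : (mu (B `|` B2) <= mu B + mu B2)%E := measureU2 mu mB mB2.
  rewrite B30 adde0 B0 B20 adde0 in l1 l2; exact: le_trans l1 l2.
pose E := P `\` N.
have mE : measurable E by exact: measurableD.
have E0 : (0 < mu E)%E.
  have l1 : (mu P <= mu (E `|` N))%E.
    apply: le_measure; rewrite ?inE //; first exact: measurableU.
    by move=> s Ps; have [Ns|Ns] := pselect (N s); [right|left].
  have l2 : (mu (E `|` N) <= mu E + mu N)%E := measureU2 mu mE mN.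
  rewrite N0 adde0 in l2; exact: lt_le_trans muP (le_trans l1 l2).
have : (0 < length_measure g [set pmul_i v; pneg (pmul_i v)])%E.
  apply: (L_pos mE) => //; first by move=> s [].
  move=> s [Ps nN].
  have nB : ~ B s by move=> Bs; apply: nN; left; left.
  have nB2 : ~ B2 s by move=> Bs; apply: nN; left; right.
  have nB3 : ~ B3 s by move=> Bs; apply: nN; right.
  have h1 := hle s Ps nB.
  have h2 : 0 <= hh s.
    have : (f^\- s = 0)%E.
      by apply: contra_notP nB2 => ne; apply: sB2 => /= /(_ Ps).
    rewrite funenegE /f => e0.
    have : (- (hh s)%:E <= maxe (- (hh s)%:E) 0)%E by rewrite le_max lexx.
    by rewrite e0 -EFinN lee_fin oppr_le0.
  have gs : g s != (0, 0) by apply: contra_notP nB3 => ne; exact: sB3.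
  have G0 : 0 < G s.
    rewrite lt_def pnorm_ge0 andbT; apply: contra gs => /eqP G0.
    have := G2 s; rewrite G0 expr0n /= => /esym e.
    have := sqr_ge0 (g s).1; have := sqr_ge0 (g s).2 => a b.
    have e1 : (g s).1 ^+ 2 = 0 by lra.
    have e2' : (g s).2 ^+ 2 = 0 by lra.
    move/eqP: e1; rewrite sqrf_eq0 => /eqP e1; move/eqP: e2'; rewrite sqrf_eq0 => /eqP e2'.
    by apply/eqP; case: (g s) e1 e2' => a' b' /= -> ->.
  have [ST hT _] := tangent_facts G0.
  have hz0 : hh s = 0 by lra.
  split => //; apply: perp_unit => //; rewrite hT hz0 mul0r //.
by rewrite hz ltxx.
Qed.

End Core.

Lemma core (R : realType) (c g : R -> R * R) : convex_loop c g ->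
  forall v, S1 v -> length_measure g [set pmul_i v; pneg (pmul_i v)] = 0%E ->
  exists y, supp (length_measure g) y /\ 0 < pdot y v.
Proof.
move=> [[cper [_ [i1 [i2 hint]]]] [gnz _]] v Sv hz.
have mP : measurable (@period R : set (measurableTypeR R)) by exact: measurable_itv.
have t2 : 0 <= (2 * pi : R) <= 2 * pi by rewrite lexx andbT mulr_ge0 ?pi_ge0.
have := hint _ t2; rewrite -[in c (2 * pi)](add0r (2 * pi)) cper.
case: (c 0) => a b; rewrite /padd /= => -[] ea eb.
have I1 : (\int[@lebesgue_measure R]_(s in @period R) ((g s).1)%:E = 0)%E.
  rewrite -(fineK (integrable_fin_num mP i1)); congr EFin.
  have : \int[@lebesgue_measure R]_(s in `[0, 2 * pi]%classic) (g s).1 = 0 by lra.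
  by [].
have I2 : (\int[@lebesgue_measure R]_(s in @period R) ((g s).2)%:E = 0)%E.
  rewrite -(fineK (integrable_fin_num mP i2)); congr EFin.
  have : \int[@lebesgue_measure R]_(s in `[0, 2 * pi]%classic) (g s).2 = 0 by lra.
  by [].
have Ih : (\int[@lebesgue_measure R]_(s in @period R) (hh g v s)%:E = 0)%E.
  have -> : (\int[@lebesgue_measure R]_(s in @period R) (hh g v s)%:E =
     \int[@lebesgue_measure R]_(s in @period R) (((g s).1)%:E * (v.1)%:E + ((g s).2)%:E * (v.2)%:E))%E.
    by apply: eq_integral => s _; rewrite /hh /pdot EFinD !EFinM.
  rewrite integralD //; last 2 first.
  - exact: integrableZr.
  - exact: integrableZr.
  by rewrite !integralZr // I1 I2 !mul0e adde0.
have [n Qpos] := stepA i1 i2 Sv Ih gnz hz.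
apply: (stepB i1 i2 Sv (d := (n.+1%:R)^-1) (Q := Qn g v n)).
- by rewrite invr_gt0 ltr0Sn.
- exact: mQn.
- by move=> s [[]].
- exact: Qpos.
- by move=> s [[_ h1] [_ h2]].
Qed.


Unset Implicit Arguments.

Theorem corollary3p3 (R : realType) (c g : bool -> R -> (R * R)%type)
  (j : bool) (r : R) (xj : (R * R)%type) :
  convex_loop (c false) (g false) -> convex_loop (c true) (g true) ->
  0 < r -> S1 xj ->
  is_degenerate_measure (length_measure (g j)) r xj ->
  (weakly_admissible (length_measure (g false)) (length_measure (g true)) <->
   length_measure (g (~~ j)) [set pmul_i xj; pneg (pmul_i xj)] = 0%E).
Proof.
move=> h0 h1 r0 Sx hd; rewrite /weakly_admissible.
case: j hd => hd /=.
- exact: (main_gen r0 Sx hd (core h0)).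
- rewrite and_comm; exact: (main_gen r0 Sx hd (core h1)).
Qed.
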